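(* Consider the sub-$\ell^\infty$ structure on $\mathbb{R}^3$ defined by $Y_1=\partial_x+\partial_y+y^2\partial_z$, $Y_2=\partial_x-\partial_y+y^2\partial_z$. Let $(\lambda,\gamma)$ be an extremal pair, $j\in\{1,2\}$, and $t_0$ a time such that the restriction to some interval $(t_0-\varepsilon,t_0)$ is a regular arc and the restriction to some interval $(t_0,t_0+\varepsilon)$ is a $\varphi_j$-singular arc (or the same with the roles of the two sides exchanged). Then on the regular arc the switching function $\varphi_j$ is a polynomial of degree $2$ in $t$, and $\varphi_j$ is differentiable at $t_0$ with $\dot\varphi_j(t_0)=0$.
   Context: Sub-$\ell^\infty$ structure defined by smooth vector fields $X_1,\dots,X_k$ on a manifold $M$ (here $X_1=Y_1$, $X_2=Y_2$): an admissible trajectory is an absolutely continuous curve $\gamma:[0,T]\to M$ together with a measurable control $u=(u_1,\dots,u_k):[0,T]\to\mathbb{R}^k$ with $|u_i(t)|\le1$ for all $i$ and a.e. $t$, such that $\dot\gamma(t)=\sum_i u_i(t)X_i(\gamma(t))$ for a.e. $t$. An extremal pair is a pair $(\lambda,\gamma)$ where $\gamma$ is admissible with control $u$ and $\lambda:[0,T]\to T^*M$ is absolutely continuous with $\lambda(t)\in T^*_{\gamma(t)}M\setminus\{0\}$, such that, with $\mathcal H(\lambda,p,u)=\sum_i u_i\langle\lambda,X_i(p)\rangle$, in canonical coordinates $\dot\lambda=-\partial_p\mathcal H(\lambda,\gamma,u)$, $\dot\gamma=\partial_\lambda\mathcal H(\lambda,\gamma,u)$ a.e., and there is a constant $\lambda_0\ge0$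 with $\sum_iu_i(t)\langle\lambda(t),X_i(\gamma(t))\rangle=\sum_i|\langle\lambda(t),X_i(\gamma(t))\rangle|=\lambda_0$ for a.e. $t$; $\gamma$ is then an extremal trajectory and $\lambda$ an extremal lift. The switching functions are $\varphi_j(t)=\langle\lambda(t),X_j(\gamma(t))\rangle$. The restriction of an extremal pair to an open interval $I$ is a $\varphi_j$-singular arc if $\varphi_j\equiv0$ on $I$, and a regular arc if $\varphi_i(t)\ne0$ for all $t\in I$ and all $i$. *)

(* Defs.v *)
From Stdlib Require Import Reals.
Open Scope R_scope.

(** Points / covectors of R^3 as triples ((x,y),z). *)
Definition pt : Type := (R * R * R)%type.
Definition cx (p : pt) : R := fst (fst p).
Definition cy (p : pt) : R := snd (fst p).
Definition cz (p : pt) : R := snd p.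

Definition Y1 (p : pt) : pt := (1, 1, (cy p)^2).
Definition Y2 (p : pt) : pt := (1, -1, (cy p)^2).
Definition Yf (j : nat) : pt -> pt :=
  match j with 1%nat => Y1 | 2%nat => Y2 | _ => fun _ => (0, 0, 0) end.

Definition pairing (l v : pt) : R := cx l * cx v + cy l * cy v + cz l * cz v.

Definition Ham (l p : pt) (v1 v2 : R) : R :=
  v1 * pairing l (Y1 p) + v2 * pairing l (Y2 p).

Fixpoint fsum (n : nat) (f : nat -> R) : R :=
  match n with O => 0 | S m => fsum m f + f m end.

(** Lebesgue outer measure of N is <= eps (countable cover by open intervals). *)
Definition small_set (N : R -> Prop) (eps : R) : Prop :=
  exists a b : nat -> R,
    (forall n, a n <= b n) /\
    (forall t, N t -> exists n, a n < t < b n) /\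
    (forall n, fsum n (fun k => b k - a k) <= eps).

Definition null_set (N : R -> Prop) : Prop :=
  forall eps, 0 < eps -> small_set N eps.

Definition ae_on (T : R) (P : R -> Prop) : Prop :=
  null_set (fun t => 0 <= t <= T /\ ~ P t).

Definition open_set (G : R -> Prop) : Prop :=
  forall x, G x -> exists r, 0 < r /\ forall y, Rabs (y - x) < r -> G y.

Definition leb_measurable (E : R -> Prop) : Prop :=
  forall eps, 0 < eps -> exists G, open_set G /\ (forall t, E t -> G t) /\
    small_set (fun t => G t /\ ~ E t) eps.

Definition measurable_on (T : R) (f : R -> R) : Prop :=
  forall c, leb_measurable (fun t => 0 <= t <= T /\ f t < c).

Definition abs_cont_on (T : R) (f : R -> R) : Prop :=
  forall eps, 0 < eps -> exists delta, 0 < delta /\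
    forall (n : nat) (a b : nat -> R),
      (forall k, (k < n)%nat -> 0 <= a k <= b k /\ b k <= T) ->
      (forall k, (S k < n)%nat -> b k <= a (S k)) ->
      fsum n (fun k => b k - a k) < delta ->
      fsum n (fun k => Rabs (f (b k) - f (a k))) < eps.

Definition admissible (T : R) (g : R -> pt) (u1 u2 : R -> R) : Prop :=
  abs_cont_on T (fun s => cx (g s)) /\ abs_cont_on T (fun s => cy (g s)) /\
  abs_cont_on T (fun s => cz (g s)) /\
  measurable_on T u1 /\ measurable_on T u2 /\
  ae_on T (fun t => Rabs (u1 t) <= 1 /\ Rabs (u2 t) <= 1) /\
  ae_on T (fun t =>
    derivable_pt_lim (fun s => cx (g s)) t
      (u1 t * cx (Y1 (g t)) + u2 t * cx (Y2 (g t))) /\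
    derivable_pt_lim (fun s => cy (g s)) t
      (u1 t * cy (Y1 (g t)) + u2 t * cy (Y2 (g t))) /\
    derivable_pt_lim (fun s => cz (g s)) t
      (u1 t * cz (Y1 (g t)) + u2 t * cz (Y2 (g t)))).

Definition extremal_pair (T : R) (lam g : R -> pt) (u1 u2 : R -> R) : Prop :=
  admissible T g u1 u2 /\
  abs_cont_on T (fun s => cx (lam s)) /\ abs_cont_on T (fun s => cy (lam s)) /\
  abs_cont_on T (fun s => cz (lam s)) /\
  (forall t, 0 <= t <= T -> lam t <> (0, 0, 0)) /\
  (* Hamilton's equations in canonical coordinates, a.e. *)
  ae_on T (fun t =>
    let l := lam t in let p := g t in let v1 := u1 t in let v2 := u2 t in
    exists dpx dpy dpz dlx dly dlz : R,
      derivable_pt_lim (fun q => Ham l (q, cy p, cz p) v1 v2) (cx p) dpx /\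
      derivable_pt_lim (fun q => Ham l (cx p, q, cz p) v1 v2) (cy p) dpy /\
      derivable_pt_lim (fun q => Ham l (cx p, cy p, q) v1 v2) (cz p) dpz /\
      derivable_pt_lim (fun q => Ham (q, cy l, cz l) p v1 v2) (cx l) dlx /\
      derivable_pt_lim (fun q => Ham (cx l, q, cz l) p v1 v2) (cy l) dly /\
      derivable_pt_lim (fun q => Ham (cx l, cy l, q) p v1 v2) (cz l) dlz /\
      derivable_pt_lim (fun s => cx (lam s)) t (- dpx) /\
      derivable_pt_lim (fun s => cy (lam s)) t (- dpy) /\
      derivable_pt_lim (fun s => cz (lam s)) t (- dpz) /\
      derivable_pt_lim (fun s => cx (g s)) t dlx /\
      derivable_pt_lim (fun s => cy (g s)) t dly /\
      derivable_pt_lim (fun s => cz (g s)) t dlz) /\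
  (* maximality condition with constant lambda0 >= 0 *)
  (exists lam0, 0 <= lam0 /\
     ae_on T (fun t =>
       u1 t * pairing (lam t) (Y1 (g t)) + u2 t * pairing (lam t) (Y2 (g t))
         = lam0 /\
       Rabs (pairing (lam t) (Y1 (g t))) + Rabs (pairing (lam t) (Y2 (g t)))
         = lam0)).

Definition phi (j : nat) (lam g : R -> pt) (t : R) : R :=
  pairing (lam t) (Yf j (g t)).

Definition singular_arc (j : nat) (lam g : R -> pt) (a b : R) : Prop :=
  forall t, a < t < b -> phi j lam g t = 0.

Definition regular_arc (lam g : R -> pt) (a b : R) : Prop :=
  forall t, a < t < b -> phi 1 lam g t <> 0 /\ phi 2 lam g t <> 0.

(* Main.v *)
Require Import Defs.
From Stdlib Require Import Reals.
From Stdlib Require Import Lra Lia List Classical FunctionalExtensionality.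
Open Scope R_scope.

Lemma fsum_ext n f h : (forall k, (k < n)%nat -> f k = h k) -> fsum n f = fsum n h.
Proof. induction n; simpl; intros H; auto. rewrite IHn by (intros; apply H; lia). rewrite H by lia; auto. Qed.

Lemma fsum_shift n f : fsum (S n) f = f O + fsum n (fun k => f (S k)).
Proof. induction n; simpl in *. lra. rewrite IHn. lra. Qed.

Lemma fsum_le n f h : (forall k, (k < n)%nat -> f k <= h k) -> fsum n f <= fsum n h.
Proof. induction n; simpl; intros H. lra. assert (fsum n f <= fsum n h) by (apply IHn; intros; apply H; lia). specialize (H n ltac:(lia)). lra. Qed.

Lemma fsum_plus n f h : fsum n (fun k => f k + h k) = fsum n f + fsum n h.
Proof. induction n; simpl. lra. rewrite IHn. lra. Qed.

Lemma fsum_scal n c f : fsum n (fun k => c * f k) = c * fsum n f.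
Proof. induction n; simpl. lra. rewrite IHn. lra. Qed.

Lemma fsum_mono n m f : (forall k, 0 <= f k) -> (n <= m)%nat -> fsum n f <= fsum m f.
Proof. intros H Hle. induction Hle. lra. simpl. specialize (H m). lra. Qed.

Lemma fsum_zero n f : (forall k, f k = 0) -> fsum n f = 0.
Proof. induction n; simpl; intros H. auto. rewrite IHn, H; auto; lra. Qed.

Lemma fsum_nonneg n f : (forall k, 0 <= f k) -> 0 <= fsum n f.
Proof. induction n; simpl; intros H. lra. specialize (IHn H). specialize (H n). lra. Qed.

Lemma fsum_abs n f : Rabs (fsum n f) <= fsum n (fun k => Rabs (f k)).
Proof. induction n; simpl. rewrite Rabs_R0; lra. eapply Rle_trans. apply Rabs_triang. lra. Qed.

Lemma null_sub (N M : R -> Prop) : null_set N -> (forall t, M t -> N t) -> null_set M.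
Proof.
  intros HN Hs eps He. destruct (HN eps He) as (a & b & H1 & H2 & H3).
  exists a, b; repeat split; auto.
Qed.

Definition il (f1 f2 : nat -> R) (k : nat) : R :=
  if Nat.even k then f1 (Nat.div2 k) else f2 (Nat.div2 k).

Lemma even_double n : Nat.even (2 * n) = true.
Proof. apply Nat.even_spec. exists n. lia. Qed.
Lemma even_sdouble n : Nat.even (S (2 * n)) = false.
Proof. rewrite Nat.even_succ, <- Nat.negb_even, even_double. reflexivity. Qed.

Lemma il_even f1 f2 n : il f1 f2 (2 * n) = f1 n.
Proof. unfold il. rewrite even_double, Nat.div2_double. auto. Qed.
Lemma il_odd f1 f2 n : il f1 f2 (S (2 * n)) = f2 n.
Proof. unfold il. rewrite even_sdouble, Nat.div2_succ_double. auto. Qed.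

Lemma fsum_il n f1 f2 : fsum (2 * n) (il f1 f2) = fsum n f1 + fsum n f2.
Proof.
  induction n. simpl. lra.
  replace (2 * S n)%nat with (S (S (2 * n))) by lia.
  cbn [fsum]. rewrite IHn. rewrite il_even, il_odd. cbn [fsum]. lra.
Qed.

Lemma null_union (N M : R -> Prop) : null_set N -> null_set M -> null_set (fun t => N t \/ M t).
Proof.
  intros HN HM eps He.
  destruct (HN (eps/2) ltac:(lra)) as (a1 & b1 & A1 & B1 & C1).
  destruct (HM (eps/2) ltac:(lra)) as (a2 & b2 & A2 & B2 & C2).
  exists (il a1 a2), (il b1 b2). repeat split.
  - intros k. unfold il. destruct (Nat.even k); auto.
  - intros t [Ht|Ht].
    + destruct (B1 t Ht) as [n Hn]. exists (2*n)%nat. rewrite !il_even. auto.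
    + destruct (B2 t Ht) as [n Hn]. exists (S (2*n))%nat. rewrite !il_odd. auto.
  - intros n.
    assert (Hnn : forall k, 0 <= il b1 b2 k - il a1 a2 k).
    { intros k. unfold il. destruct (Nat.even k). specialize (A1 (Nat.div2 k)); lra. specialize (A2 (Nat.div2 k)); lra. }
    apply Rle_trans with (fsum (2*n) (fun k => il b1 b2 k - il a1 a2 k)).
    apply fsum_mono; auto; lia.
    rewrite (fsum_ext _ _ (il (fun k => b1 k - a1 k) (fun k => b2 k - a2 k))).
    rewrite fsum_il. specialize (C1 n). specialize (C2 n). lra.
    intros k _. unfold il. destruct (Nat.even k); auto.
Qed.

Lemma null_single c : null_set (fun t => t = c).
Proof.
  intros eps He. exists (fun k => match k with O => c - eps/4 | _ => c end),
    (fun k => match k with O => c + eps/4 | _ => c end). repeat split.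
  - intros [|k]; lra.
  - intros t ->. exists O. lra.
  - intros [|n]. simpl; lra. rewrite fsum_shift. rewrite fsum_zero. lra. intros; lra.
Qed.
Lemma real_ind (P : R -> Prop) a b : a <= b -> P a ->
 (forall x, a <= x < b -> P x -> exists r, 0 < r /\ forall y, x < y < x + r -> y <= b -> P y) ->
 (forall x, a < x <= b -> (forall y, a <= y < x -> P y) -> P x) ->
 forall x, a <= x <= b -> P x.
Proof.
  intros Hab Pa Hstep Hlim.
  set (E := fun x => a <= x <= b /\ forall y, a <= y <= x -> P y).
  assert (HE : bound E) by (exists b; intros x [Hx _]; lra).
  assert (Ea : exists x, E x) by (exists a; split; [lra| intros y Hy; replace y with a by lra; auto]).
  destruct (completeness E HE Ea) as [s [Hub Hlub]].
  assert (Has : a <= s) by (apply Hub; destruct Ea; unfold E; split; [lra| intros y Hy; replace y with a by lra; auto]).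
  assert (Hsb : s <= b) by (apply Hlub; intros x [Hx _]; lra).
  assert (H1 : forall y, a <= y < s -> P y).
  { intros y Hy. apply NNPP; intros Hn.
    assert (s <= y); [|lra]. apply Hlub. intros x [Hx Hx']. destruct (Rle_dec x y); auto.
    exfalso; apply Hn; apply Hx'; lra. }
  assert (Ps : P s).
  { destruct (Req_dec s a) as [->|Hne]; auto. apply Hlim; [lra|]. auto. }
  assert (Es : forall y, a <= y <= s -> P y).
  { intros y Hy. destruct (Req_dec y s) as [->|]; auto. apply H1; lra. }
  destruct (Req_dec s b) as [<-|Hne].
  - intros x Hx. apply Es; lra.
  - destruct (Hstep s ltac:(lra) Ps) as [r [Hr Hr']].
    set (z := Rmin (s + r/2) b).
    assert (Hz1 : s < z) by (unfold z; apply Rmin_glb_lt; lra).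
    assert (Hz2 : z <= s + r/2) by apply Rmin_l.
    assert (Hz3 : z <= b) by apply Rmin_r.
    assert (z <= s); [|lra].
    apply Hub. split; [lra|]. intros y Hy. destruct (Rle_dec y s). apply Es; lra.
    apply Hr'; lra.
Qed.

Definition piece := (R * R * nat)%type.
Fixpoint ordered (lo : R) (L : list piece) (hi : R) : Prop :=
  match L with nil => lo <= hi | ((y,z),_) :: L' => lo <= y /\ y <= z /\ ordered z L' hi end.
Fixpoint sumF (F : R -> R -> R) (L : list piece) : R :=
  match L with nil => 0 | ((y,z),_) :: L' => F y z + sumF F L' end.

Definition pa (L : list piece) k := fst (fst (nth k L ((0,0),O))).
Definition pb (L : list piece) k := snd (fst (nth k L ((0,0),O))).

Lemma fsum_nth F L : fsum (length L) (fun k => F (pa L k) (pb L k)) = sumF F L.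
Proof.
  induction L as [|[[y z] n] L IH]. reflexivity.
  simpl length. rewrite fsum_shift. unfold pa, pb in *. simpl. rewrite IH. reflexivity.
Qed.

Lemma ordered_le lo L hi : ordered lo L hi -> lo <= hi.
Proof. revert lo; induction L as [|[[y z] n] L IH]; simpl; intros lo H; auto. destruct H as (H1&H2&H3). apply IH in H3. lra. Qed.

Lemma ordered_nth L : forall lo hi, ordered lo L hi ->
  (forall k, (k < length L)%nat -> lo <= pa L k <= pb L k /\ pb L k <= hi) /\
  (forall k, (S k < length L)%nat -> pb L k <= pa L (S k)).
Proof.
  induction L as [|[[y z] n] L IH]; intros lo hi H.
  - simpl; split; intros; lia.
  - simpl in H. destruct H as (H1&H2&H3). destruct (IH _ _ H3) as [IH1 IH2].
    pose proof (ordered_le _ _ _ H3).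
    unfold pa, pb in *. split.
    + intros [|k] Hk; simpl. lra. simpl in Hk. specialize (IH1 k ltac:(lia)). lra.
    + intros [|k] Hk; simpl. simpl in Hk. specialize (IH1 O ltac:(lia)). lra. apply IH2. simpl in Hk; lia.
Qed.

Lemma AC_list T f eps : abs_cont_on T f -> 0 < eps -> exists delta, 0 < delta /\
  forall L, ordered 0 L T -> sumF (fun y z => z - y) L < delta -> sumF (fun y z => Rabs (f z - f y)) L < eps.
Proof.
  intros HAC He. destruct (HAC eps He) as [d [Hd Hd']]. exists d; split; auto.
  intros L HL Hs. rewrite <- fsum_nth. rewrite <- fsum_nth in Hs.
  destruct (ordered_nth L _ _ HL) as [O1 O2].
  apply Hd'; auto.
Qed.

Lemma ordered_mono_hi lo L hi hi' : ordered lo L hi -> hi <= hi' -> ordered lo L hi'.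
Proof. revert lo; induction L as [|[[y z] n] L IH]; simpl; intros lo H Hh. lra. destruct H as (?&?&?). split; [|split]; auto. Qed.
Lemma ordered_mono_lo lo lo' L hi : ordered lo L hi -> lo' <= lo -> ordered lo' L hi.
Proof. destruct L as [|[[y z] n] L]; simpl; intros; intuition lra. Qed.
Lemma ordered_app lo L hi y z n : ordered lo L hi -> hi <= y -> y <= z -> ordered lo (L ++ ((y,z),n)::nil) z.
Proof. revert lo; induction L as [|[[y' z'] n'] L IH]; simpl; intros lo H H1 H2. repeat split; lra. destruct H as (?&?&?). split; [|split]; auto. Qed.
Lemma sumF_app F L p : sumF F (L ++ p :: nil) = sumF F L + sumF F (p :: nil).
Proof. destruct p as [[y0 z0] n0]. induction L as [|[[y z] n] L IH]; simpl. lra. simpl in IH. rewrite IH. lra. Qed.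
Inductive chain (g : R -> R) (eps : R) (a b : nat -> R) (c : R) : R -> list piece -> Prop :=
| ch0 : chain g eps a b c c nil
| chg : forall y z L, chain g eps a b c y L -> y <= z -> Rabs (g z - g y) <= eps * (z - y) ->
    chain g eps a b c z L
| chb : forall y z n L, chain g eps a b c y L -> y <= z -> a n < y -> z < b n ->
    chain g eps a b c z (L ++ ((y,z),n)::nil).

Lemma ch_ord g eps a b c x L : chain g eps a b c x L -> ordered c L x.
Proof.
  induction 1. simpl; lra. eapply ordered_mono_hi; eauto. apply ordered_app with y; auto; lra.
Qed.



Lemma ch_bound g eps a b c x L : 0 <= eps -> chain g eps a b c x L ->
  Rabs (g x - g c) <= eps * (x - c) + sumF (fun y z => Rabs (g z - g y)) L.
Proof.
  intros He. induction 1.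
  - replace (g c - g c) with 0 by ring. rewrite Rabs_R0. simpl. lra.
  - replace (g z - g c) with ((g z - g y) + (g y - g c)) by ring.
    eapply Rle_trans. apply Rabs_triang. lra.
  - rewrite sumF_app. simpl.
    replace (g z - g c) with ((g z - g y) + (g y - g c)) by ring.
    eapply Rle_trans. apply Rabs_triang.
    assert (0 <= eps * (z - y)) by (apply Rmult_le_pos; lra). lra.
Qed.

Lemma ch_in g eps a b c x L : chain g eps a b c x L -> forall y z n, In ((y,z),n) L -> a n < y /\ z < b n.
Proof.
  induction 1; intros y' z' n' Hin. destruct Hin. auto.
  apply in_app_or in Hin. destruct Hin as [Hin|[Hin|[]]]. auto. inversion Hin; subst; auto.
Qed.

Lemma ch_trunc g eps a b c x L : chain g eps a b c x L -> forall y z n, In ((y,z),n) L ->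
  exists L1 L2, L = L1 ++ ((y,z),n) :: L2 /\ chain g eps a b c y L1.
Proof.
  induction 1; intros y' z' n' Hin. destruct Hin. auto.
  apply in_app_or in Hin. destruct Hin as [Hin|[Hin|[]]].
  - destruct (IHchain _ _ _ Hin) as (L1 & L2 & -> & HL1). exists L1, (L2 ++ ((y,z),n)::nil).
    split; auto. rewrite <- app_assoc. reflexivity.
  - inversion Hin; subst. exists L, nil. split; auto.
Qed.

Fixpoint sumN (l : nat -> R) (L : list nat) : R :=
  match L with nil => 0 | k :: L' => l k + sumN l L' end.

Lemma sumN_app l L1 L2 : sumN l (L1 ++ L2) = sumN l L1 + sumN l L2.
Proof. induction L1; simpl. lra. rewrite IHL1; lra. Qed.

Lemma sumN_le l : (forall k, 0 <= l k) -> forall M L, NoDup L -> (forall k, In k L -> (k < M)%nat) ->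
  sumN l L <= fsum M l.
Proof.
  intros Hl M. induction M; intros L HN HM.
  - destruct L as [|k L]. simpl; lra. specialize (HM k (or_introl eq_refl)). lia.
  - destruct (in_dec Nat.eq_dec M L) as [Hin|Hnin].
    + destruct (in_split _ _ Hin) as (L1 & L2 & ->).
      rewrite sumN_app. simpl. 
      assert (H := IHM (L1 ++ L2) (NoDup_remove_1 _ _ _ HN)).
      rewrite sumN_app in H. simpl fsum.
      assert (sumN l L1 + sumN l L2 <= fsum M l); [|lra].
      apply H. intros k Hk. pose proof (NoDup_remove_2 _ _ _ HN).
      assert (k <> M) by (intros ->; auto).
      assert (k < S M)%nat by (apply HM; apply in_or_app; apply in_app_or in Hk; simpl; tauto). lia.
    + simpl. assert (sumN l L <= fsum M l); [|specialize (Hl M); lra].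
      apply IHM; auto. intros k Hk. assert (k <> M) by (intros ->; auto). specialize (HM k Hk). lia.
Qed.

Lemma list_bound (L : list nat) : exists M, forall k, In k L -> (k < M)%nat.
Proof.
  induction L as [|k L [M HM]]. exists O; intros _ []. exists (S (Nat.max k M)).
  intros k' [->|H]. lia. specialize (HM k' H). lia.
Qed.

Lemma sumlen_le (a b : nat -> R) L : forall lo hi, ordered lo L hi ->
  (forall y z n, In ((y,z),n) L -> a n < y /\ z < b n) ->
  sumF (fun y z => z - y) L <= sumN (fun k => b k - a k) (map snd L).
Proof.
  induction L as [|[[y z] n] L IH]; intros lo hi Ho Hin; simpl. lra.
  simpl in Ho. destruct Ho as (_ & _ & Ho).
  specialize (Hin y z n (or_introl eq_refl)) as Hp.
  assert (sumF (fun y z => z - y) L <= sumN (fun k => b k - a k) (map snd L)).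
  { eapply IH; eauto. intros; apply Hin; simpl; auto. }
  lra.
Qed.

Lemma NoDup_snoc (l : list nat) n : NoDup l -> ~ In n l -> NoDup (l ++ n :: nil).
Proof.
  induction l as [|x l IHl]; simpl; intros H Hn.
  - constructor. intros []. constructor.
  - inversion H; subst. constructor.
    + intros Hin. apply in_app_or in Hin. destruct Hin as [Hin|Hin]; auto.
      destruct Hin as [Hin|[]]. apply Hn; auto.
    + apply IHl; auto.
Qed.
Lemma ordered_mid lo L1 y' z' n L2 hi : ordered lo (L1 ++ ((y',z'),n)::L2) hi -> y' <= z' <= hi.
Proof.
  revert lo; induction L1 as [|[[y z] m] L1 IH]; simpl; intros lo H.
  - destruct H as (?&?&H). apply ordered_le in H. lra.
  - destruct H as (?&?&H). eapply IH; eauto.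
Qed.

Lemma deriv_local g x eps : derivable_pt_lim g x 0 -> 0 < eps ->
  exists r, 0 < r /\ forall y, Rabs (y - x) < r -> Rabs (g y - g x) <= eps * Rabs (y - x).
Proof.
  intros H He. destruct (H eps He) as [del Hd]. exists del; split. apply cond_pos.
  intros y Hy. destruct (Req_dec y x) as [->|Hne].
  - replace (g x - g x) with 0 by ring. rewrite Rabs_R0. replace (x - x) with 0 by ring. rewrite Rabs_R0. lra.
  - assert (Hh : y - x <> 0) by lra. specialize (Hd (y - x) Hh Hy).
    replace (x + (y - x)) with y in Hd by ring. rewrite Rminus_0_r in Hd.
    unfold Rdiv in Hd. rewrite Rabs_mult, Rabs_inv in Hd.
    assert (0 < Rabs (y - x)) by (apply Rabs_pos_lt; auto).
    apply Rmult_lt_compat_r with (r := Rabs (y - x)) in Hd; auto.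
    rewrite Rmult_assoc, Rinv_l in Hd by lra. lra.
Qed.

Lemma KL T g N c d : abs_cont_on T g -> null_set N -> 0 <= c -> c <= d -> d <= T ->
  (forall t, c < t < d -> ~ N t -> derivable_pt_lim g t 0) -> g d = g c.
Proof.
  intros HAC HN Hc Hcd HdT Hder.
  assert (Main : forall eps, 0 < eps -> Rabs (g d - g c) <= eps * (d - c) + eps).
  { intros eps He.
    destruct (AC_list T g eps HAC He) as [delta [Hdel Hdel']].
    assert (HB : null_set (fun t => (N t \/ t = c) \/ t = d)).
    { apply null_union. apply null_union; auto. apply null_single. apply null_single. }
    destruct (HB (delta/2) ltac:(lra)) as (a & b & Hab & Hcov & Hsum).
    set (Q := fun x => exists L, chain g eps a b c x L /\ NoDup (map snd L)).
    assert (Bext : forall y z n, Q y -> y <= z -> a n < y -> z < b n -> Q z).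
    { intros y z n [L [HL HND]] Hyz Hay Hzb.
      destruct (in_dec Nat.eq_dec n (map snd L)) as [Hin|Hnin].
      - apply in_map_iff in Hin. destruct Hin as [[[y' z'] n'] [Hn' Hp]]. simpl in Hn'. subst n'.
        destruct (ch_trunc _ _ _ _ _ _ _ HL _ _ _ Hp) as (L1 & L2 & HLe & HL1).
        destruct (ch_in _ _ _ _ _ _ _ HL _ _ _ Hp) as [Ha' Hb'].
        pose proof (ch_ord _ _ _ _ _ _ _ HL) as Ho. rewrite HLe in Ho. apply ordered_mid in Ho.
        exists (L1 ++ ((y',z),n)::nil). split.
        + apply chb; auto; lra.
        + rewrite HLe in HND. rewrite map_app in *. simpl in *.
          apply NoDup_app_remove_r with (l' := map snd L2). rewrite <- app_assoc. simpl. auto.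
      - exists (L ++ ((y,z),n)::nil). split. apply chb; auto.
        rewrite map_app. simpl. apply NoDup_snoc; auto. }
    assert (Gext : forall y z, Q y -> y <= z -> Rabs (g z - g y) <= eps * (z - y) -> Q z).
    { intros y z [L [HL HND]] H1 H2. exists L. split; auto. eapply chg; eauto. }
    assert (Qd : Q d).
    { apply (real_ind Q c d); auto; try lra.
      - exists nil. split. constructor. constructor.
      - intros x Hx Qx. destruct (classic (c < x < d /\ ~ N x)) as [Hg|Hbad].
        + destruct (deriv_local g x eps (Hder x ltac:(lra) (proj2 Hg)) He) as [r [Hr Hr']].
          exists r. split; auto. intros y Hy Hyd. apply Gext with x; auto; try lra.
          specialize (Hr' y). rewrite (Rabs_pos_eq (y - x)) in Hr' by lra. apply Hr'. lra.
        + assert (Hbx : (N x \/ x = c) \/ x = d).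
          { destruct (classic (N x)); auto. left; right. destruct (Req_dec x c); auto. exfalso; apply Hbad; split; auto; lra. }
          destruct (Hcov x Hbx) as [n Hn]. exists (b n - x). split. lra.
          intros y Hy Hyd. apply Bext with x n; auto; lra.
      - intros x Hx HQ. destruct (classic (c < x < d /\ ~ N x)) as [Hg|Hbad].
        + destruct (deriv_local g x eps (Hder x ltac:(lra) (proj2 Hg)) He) as [r [Hr Hr']].
          set (y0 := Rmax c (x - r/2)).
          assert (Hy1 : c <= y0) by apply Rmax_l.
          assert (Hy2 : x - r/2 <= y0) by apply Rmax_r.
          assert (Hy3 : y0 < x) by (apply Rmax_lub_lt; lra).
          apply Gext with y0; [apply HQ; lra | lra | ].
          specialize (Hr' y0). rewrite (Rabs_left (y0 - x)) in Hr' by lra.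
          rewrite Rabs_minus_sym. replace (x - y0) with (- (y0 - x)) by ring. apply Hr'. lra.
        + assert (Hbx : (N x \/ x = c) \/ x = d).
          { destruct (classic (N x)); auto. right. destruct (Req_dec x d); auto. exfalso; apply Hbad; split; auto; lra. }
          destruct (Hcov x Hbx) as [n Hn].
          set (y0 := Rmax c ((a n + x)/2)).
          assert (Hy1 : c <= y0) by apply Rmax_l.
          assert (Hy2 : (a n + x)/2 <= y0) by apply Rmax_r.
          assert (Hy3 : y0 < x) by (apply Rmax_lub_lt; lra).
          apply Bext with y0 n; [apply HQ; lra | lra | lra | lra]. }
    destruct Qd as [L [HL HND]].
    pose proof (ch_bound g eps a b c d L ltac:(lra) HL) as Hbd.
    assert (sumF (fun y z => Rabs (g z - g y)) L < eps); [|lra].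
    apply Hdel'.
    - eapply ordered_mono_lo. eapply ordered_mono_hi. eapply ch_ord; eauto. auto. auto.
    - eapply Rle_lt_trans. eapply sumlen_le. eapply ch_ord; eauto. eapply ch_in; eauto.
      destruct (list_bound (map snd L)) as [M HM].
      eapply Rle_lt_trans. apply sumN_le with (M := M); auto. intros k; specialize (Hab k); lra.
      specialize (Hsum M). lra. }
  destruct (Req_dec (g d - g c) 0) as [H|H]. lra. exfalso.
  pose proof (Rabs_pos_lt _ H) as Hp.
  set (e := Rabs (g d - g c) / (2 * (d - c + 1))).
  assert (He : 0 < e) by (unfold e; apply Rdiv_lt_0_compat; lra).
  specialize (Main e He).
  assert (e * (d - c) + e = Rabs (g d - g c) / 2) by (unfold e; field; lra). lra.
Qed.
Lemma KL_all T g N c d : abs_cont_on T g -> null_set N -> 0 <= c -> c <= d -> d <= T ->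
  (forall t, c < t < d -> ~ N t -> derivable_pt_lim g t 0) -> forall x, c <= x <= d -> g x = g c.
Proof. intros. apply (KL T g N c x); auto; lra || (intros; apply H4; auto; lra). Qed.

Lemma AC_id T : abs_cont_on T (fun t => t).
Proof.
  intros eps He. exists eps; split; auto. intros n a b Hk _ Hs.
  rewrite (fsum_ext _ _ (fun k => b k - a k)); auto.
  intros k Hk'. specialize (Hk k Hk'). rewrite Rabs_pos_eq; lra.
Qed.

Lemma nonnull T N c d : null_set N -> 0 <= c -> c < d -> d <= T -> exists t, c < t < d /\ ~ N t.
Proof.
  intros HN Hc Hcd HdT. apply NNPP; intros Hn.
  assert (H := KL T (fun t => t) N c d (AC_id T) HN Hc ltac:(lra) HdT).
  assert (d = c); [|lra]. apply H. intros t Ht HNt. exfalso. apply Hn. exists t; auto.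
Qed.

Lemma AC_ext T f h : (forall s, f s = h s) -> abs_cont_on T f -> abs_cont_on T h.
Proof.
  intros E H eps He. destruct (H eps He) as [d [Hd Hd']]. exists d; split; auto.
  intros n a b H1 H2 H3. rewrite (fsum_ext _ _ (fun k => Rabs (f (b k) - f (a k)))).
  apply Hd'; auto. intros k _. rewrite !E; auto.
Qed.

Lemma AC_quad T f al be ga : abs_cont_on T f ->
  abs_cont_on T (fun s => f s + al * s + be * s^2 + ga).
Proof.
  intros H eps He. destruct (H (eps/2) ltac:(lra)) as [d [Hd Hd']].
  set (L := Rabs al + 2 * Rabs be * Rabs T + 1).
  assert (HL : 0 < L) by (unfold L; pose proof (Rabs_pos al); pose proof (Rabs_pos be); pose proof (Rabs_pos T);
     assert (0 <= Rabs be * Rabs T) by (apply Rmult_le_pos; auto); lra).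
  exists (Rmin d (eps / (2 * L))). split. apply Rmin_glb_lt; auto. apply Rdiv_lt_0_compat; lra.
  intros n a b Hk Hord Hs.
  assert (Hs1 : fsum n (fun k => b k - a k) < d) by (eapply Rlt_le_trans; [apply Hs| apply Rmin_l]).
  assert (Hs2 : fsum n (fun k => b k - a k) < eps / (2*L)) by (eapply Rlt_le_trans; [apply Hs| apply Rmin_r]).
  specialize (Hd' n a b Hk Hord Hs1).
  apply Rle_lt_trans with (fsum n (fun k => Rabs (f (b k) - f (a k)) + L * (b k - a k))).
  - apply fsum_le. intros k Hkn. specialize (Hk k Hkn).
    replace (f (b k) + al * b k + be * b k ^ 2 + ga - (f (a k) + al * a k + be * a k ^ 2 + ga))
      with ((f (b k) - f (a k)) + (b k - a k) * (al + be * (b k + a k))) by ring.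
    eapply Rle_trans. apply Rabs_triang. apply Rplus_le_compat_l.
    rewrite Rabs_mult, (Rabs_pos_eq (b k - a k)) by lra.
    rewrite Rmult_comm. apply Rmult_le_compat_r. lra.
    eapply Rle_trans. apply Rabs_triang. rewrite Rabs_mult.
    rewrite (Rabs_pos_eq (b k + a k)) by lra.
    unfold L. rewrite (Rabs_pos_eq T) by lra. pose proof (Rabs_pos be).
    assert (Rabs be * (b k + a k) <= Rabs be * (2 * T)) by (apply Rmult_le_compat_l; lra). lra.
  - rewrite fsum_plus, fsum_scal.
    assert (L * fsum n (fun k => b k - a k) < L * (eps / (2 * L))) by (apply Rmult_lt_compat_l; auto).
    replace (L * (eps / (2 * L))) with (eps / 2) in H0 by (field; lra). lra.
Qed.

Definition cw (T : R) (f : R -> R) (t : R) := limit1_in f (fun s => 0 <= s <= T) (f t) t.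

Lemma AC_cw T f t : abs_cont_on T f -> 0 <= t <= T -> cw T f t.
Proof.
  intros H Ht eps He. destruct (H eps He) as [d [Hd Hd']]. exists d; split; auto.
  intros x [Dx Hx]. simpl in *. unfold Rdist in *.
  destruct (Rle_dec x t).
  - specialize (Hd' 1%nat (fun _ => x) (fun _ => t)). simpl in Hd'.
    rewrite Rabs_minus_sym. replace (t - x) with (0 + (t - x)) by ring.
    replace (Rabs (f t - f x)) with (0 + Rabs (f t - f x)) by ring.
    apply Hd'. intros; lra. intros; lia. rewrite Rabs_left1 in Hx by lra. lra.
  - specialize (Hd' 1%nat (fun _ => t) (fun _ => x)). simpl in Hd'.
    replace (Rabs (f x - f t)) with (0 + Rabs (f x - f t)) by ring.
    apply Hd'. intros; lra. intros; lia. rewrite Rabs_pos_eq in Hx by lra. lra.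
Qed.

Lemma limc (D : R -> Prop) k t : limit1_in (fun _ => k) D k t.
Proof. intros eps He. exists 1; split. lra. intros x _. simpl. unfold Rdist. replace (k - k) with 0 by ring. rewrite Rabs_R0. lra. Qed.

Lemma lim_phi D LX LY LZ GY s t : limit1_in LX D (LX t) t -> limit1_in LY D (LY t) t ->
  limit1_in LZ D (LZ t) t -> limit1_in GY D (GY t) t ->
  limit1_in (fun x => LX x + s * LY x + LZ x * GY x ^ 2) D (LX t + s * LY t + LZ t * GY t ^ 2) t.
Proof.
  intros H1 H2 H3 H4.
  exact (limit_plus _ _ _ _ _ _ (limit_plus _ _ _ _ _ _ H1 (limit_mul _ _ _ _ _ _ (limc D s t) H2))
     (limit_mul _ _ _ _ _ _ H3 (limit_mul _ _ _ _ _ _ H4 (limit_mul _ _ _ _ _ _ H4 (limc D 1 t))))).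
Qed.

Lemma nochange T f p q : 0 <= p -> p <= q -> q <= T -> (forall t, p <= t <= q -> cw T f t) ->
  (forall t, p <= t <= q -> f t <> 0) -> 0 < f p -> 0 < f q.
Proof.
  intros Hp Hpq HqT Hc Hnz Hfp.
  apply (real_ind (fun x => 0 < f x) p q); auto; try lra.
  - intros x Hx Hfx. destruct (Hc x ltac:(lra) (f x) Hfx) as [d [Hd Hd']].
    exists d; split; auto. intros y Hy Hyq. specialize (Hd' y). simpl in Hd'. unfold Rdist in Hd'.
    assert (Rabs (f y - f x) < f x) by (apply Hd'; split; [lra| rewrite Rabs_pos_eq; lra]).
    apply Rabs_def2 in H. lra.
  - intros x Hx Hl. destruct (Rtotal_order (f x) 0) as [Hneg|[H0|Hpos]]; auto.
    + destruct (Hc x ltac:(lra) (- f x) ltac:(lra)) as [d [Hd Hd']].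
      set (y := Rmax p (x - d/2)).
      assert (p <= y) by apply Rmax_l. assert (x - d/2 <= y) by apply Rmax_r.
      assert (y < x) by (apply Rmax_lub_lt; lra).
      specialize (Hd' y). simpl in Hd'. unfold Rdist in Hd'.
      assert (Rabs (f y - f x) < - f x) by (apply Hd'; split; [lra| rewrite Rabs_left; lra]).
      apply Rabs_def2 in H2. specialize (Hl y ltac:(lra)). lra.
    + exfalso; apply (Hnz x); auto; lra.
Qed.

Lemma sign_pos T f ra rb m : 0 <= ra -> ra < m < rb -> rb <= T -> (forall t, 0 <= t <= T -> cw T f t) ->
  (forall t, ra < t < rb -> f t <> 0) -> 0 < f m -> forall t, ra < t < rb -> 0 < f t.
Proof.
  intros H1 H2 H3 Hc Hnz Hm t Ht.
  destruct (Rle_dec m t).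
  - apply (nochange T f m t); auto; try lra. intros; apply Hc; lra. intros; apply Hnz; lra.
  - destruct (Rtotal_order (f t) 0) as [Hneg|[H0|Hpos]]; auto.
    + assert (0 < - f m); [|lra].
      apply (nochange T (fun x => - f x) t m); auto; try lra.
      intros; apply limit_Ropp; apply Hc; lra.
      intros x Hx. specialize (Hnz x ltac:(lra)). lra.
    + exfalso; apply (Hnz t); auto.
Qed.

Lemma sign_const T f ra rb : 0 <= ra -> ra < rb -> rb <= T -> (forall t, 0 <= t <= T -> cw T f t) ->
  (forall t, ra < t < rb -> f t <> 0) -> exists sg, (sg = 1 \/ sg = -1) /\ forall t, ra < t < rb -> 0 < sg * f t.
Proof.
  intros H1 H2 H3 Hc Hnz. set (m := (ra + rb)/2).
  destruct (Rtotal_order (f m) 0) as [Hneg|[H0|Hpos]].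
  - exists (-1). split; auto. intros t Ht.
    assert (0 < - f t); [|lra].
    apply (sign_pos T (fun x => - f x) ra rb m); auto; try (unfold m; lra).
    intros; apply limit_Ropp; apply Hc; auto. intros x Hx. specialize (Hnz x Hx). lra. lra.
  - exfalso; apply (Hnz m); auto; unfold m; lra.
  - exists 1. split; auto. intros t Ht. rewrite Rmult_1_l. apply (sign_pos T f ra rb m); auto; unfold m; lra.
Qed.

Lemma ctrl_eq u v p q sg tg lam0 : Rabs u <= 1 -> Rabs v <= 1 -> u * p + v * q = lam0 ->
  Rabs p + Rabs q = lam0 -> (sg = 1 \/ sg = -1) -> 0 < sg * p -> (tg = 1 \/ tg = -1) -> 0 < tg * q ->
  u = sg /\ v = tg.
Proof.
  intros Hu Hv H1 H2 Hs Hps Ht Hqt.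
  assert (A1 : u * p <= Rabs p).
  { eapply Rle_trans. apply Rle_abs. rewrite Rabs_mult. pose proof (Rabs_pos p).
    assert (Rabs u * Rabs p <= 1 * Rabs p) by (apply Rmult_le_compat_r; auto). lra. }
  assert (A2 : v * q <= Rabs q).
  { eapply Rle_trans. apply Rle_abs. rewrite Rabs_mult. pose proof (Rabs_pos q).
    assert (Rabs v * Rabs q <= 1 * Rabs q) by (apply Rmult_le_compat_r; auto). lra. }
  assert (E1 : u * p = Rabs p) by lra. assert (E2 : v * q = Rabs q) by lra.
  split.
  - destruct Hs as [->| ->].
    + rewrite Rabs_pos_eq in E1 by lra. assert ((u - 1) * p = 0) by lra.
      apply Rmult_integral in H. destruct H; lra.
    + rewrite Rabs_left in E1 by lra. assert ((u + 1) * p = 0) by lra.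
      apply Rmult_integral in H. destruct H; lra.
  - destruct Ht as [->| ->].
    + rewrite Rabs_pos_eq in E2 by lra. assert ((v - 1) * q = 0) by lra.
      apply Rmult_integral in H. destruct H; lra.
    + rewrite Rabs_left in E2 by lra. assert ((v + 1) * q = 0) by lra.
      apply Rmult_integral in H. destruct H; lra.
Qed.

Lemma dpl_eq f x l l' : derivable_pt_lim f x l -> l = l' -> derivable_pt_lim f x l'.
Proof. intros H ->; auto. Qed.

Lemma dquad f t df al be ga : derivable_pt_lim f t df ->
  derivable_pt_lim (fun x => f x + al * x + be * x^2 + ga) t (df + al + 2 * be * t).
Proof.
  intros H.
  assert (Hx : derivable_pt_lim (fun x => x) t 1) by apply derivable_pt_lim_id.
  assert (Hc : forall k, derivable_pt_lim (fun _ => k) t 0) by (intros; apply derivable_pt_lim_const).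
  pose proof (derivable_pt_lim_plus _ _ _ _ _ (derivable_pt_lim_plus _ _ _ _ _
     (derivable_pt_lim_plus _ _ _ _ _ H (derivable_pt_lim_mult _ _ _ _ _ (Hc al) Hx))
     (derivable_pt_lim_mult _ _ _ _ _ (Hc be) (derivable_pt_lim_mult _ _ _ _ _ Hx
        (derivable_pt_lim_mult _ _ _ _ _ Hx (Hc 1))))) (Hc ga)) as D.
  eapply dpl_eq. exact D. unfold mult_fct, plus_fct. simpl. ring.
Qed.

Lemma dphi LX LY LZ GY s t dx dy dz dg : derivable_pt_lim LX t dx -> derivable_pt_lim LY t dy ->
  derivable_pt_lim LZ t dz -> derivable_pt_lim GY t dg ->
  derivable_pt_lim (fun x => LX x + s * LY x + LZ x * GY x ^ 2) t
    (dx + s * dy + (dz * GY t ^ 2 + LZ t * (2 * GY t * dg))).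
Proof.
  intros H1 H2 H3 H4.
  assert (Hc : forall k, derivable_pt_lim (fun _ => k) t 0) by (intros; apply derivable_pt_lim_const).
  pose proof (derivable_pt_lim_plus _ _ _ _ _ (derivable_pt_lim_plus _ _ _ _ _ H1
     (derivable_pt_lim_mult _ _ _ _ _ (Hc s) H2))
     (derivable_pt_lim_mult _ _ _ _ _ H3 (derivable_pt_lim_mult _ _ _ _ _ H4
        (derivable_pt_lim_mult _ _ _ _ _ H4 (Hc 1))))) as D.
  eapply dpl_eq. exact D. unfold mult_fct, plus_fct. simpl. ring.
Qed.

Lemma loc_zero f a b t : (forall y, a < y < b -> f y = 0) -> a < t < b -> derivable_pt_lim f t 0.
Proof.
  intros H Ht eps He. assert (Hd : 0 < Rmin (t - a) (b - t)) by (apply Rmin_glb_lt; lra).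
  exists (mkposreal _ Hd). intros h Hh Hlt. simpl in Hlt.
  assert (Rabs h < t - a) by (eapply Rlt_le_trans; [apply Hlt|apply Rmin_l]).
  assert (Rabs h < b - t) by (eapply Rlt_le_trans; [apply Hlt|apply Rmin_r]).
  apply Rabs_def2 in H0. apply Rabs_def2 in H1.
  rewrite (H (t + h)) by lra. rewrite (H t) by lra. unfold Rdiv. rewrite Rminus_0_r, Rminus_0_l, Ropp_0, Rmult_0_l, Rabs_R0. auto.
Qed.

Lemma near_int sa sb t0 d : sa < sb -> (t0 = sa \/ t0 = sb) -> 0 < d ->
  exists p q, p < q /\ sa <= p /\ q <= sb /\ t0 - d < p /\ q < t0 + d.
Proof.
  intros H1 H2 H3. exists (Rmax sa (t0 - d/2)), (Rmin sb (t0 + d/2)).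
  pose proof (Rmax_l sa (t0 - d/2)). pose proof (Rmax_r sa (t0 - d/2)).
  pose proof (Rmin_l sb (t0 + d/2)). pose proof (Rmin_r sb (t0 + d/2)).
  repeat split; auto.
  - apply Rmax_lub_lt; apply Rmin_glb_lt; destruct H2; lra.
  - lra.
  - lra.
Qed.
Lemma core (T : R) (LX LY LZ GY uj uo : R -> R) (s lam0 : R) (N : R -> Prop)
  (t0 A B ra rb sa sb m0 : R) :
  abs_cont_on T LX -> abs_cont_on T LY -> abs_cont_on T LZ -> abs_cont_on T GY -> null_set N ->
  (s = 1 \/ s = -1) -> 0 <= lam0 ->
  (forall t, 0 <= t <= T -> ~ N t ->
     derivable_pt_lim LX t 0 /\ derivable_pt_lim LZ t 0 /\
     derivable_pt_lim LY t (-(uj t + uo t) * 2 * GY t * LZ t) /\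
     derivable_pt_lim GY t (s * (uj t - uo t)) /\
     Rabs (uj t) <= 1 /\ Rabs (uo t) <= 1 /\
     uj t * (LX t + s * LY t + LZ t * GY t ^ 2) + uo t * (LX t + (- s) * LY t + LZ t * GY t ^ 2) = lam0 /\
     Rabs (LX t + s * LY t + LZ t * GY t ^ 2) + Rabs (LX t + (- s) * LY t + LZ t * GY t ^ 2) = lam0) ->
  0 <= A -> B <= T -> A <= ra -> ra < rb -> rb <= B -> A <= sa -> sa < sb -> sb <= B ->
  (t0 = ra \/ t0 = rb) -> (t0 = sa \/ t0 = sb) -> 0 < m0 ->
  (forall h, 0 < Rabs h < m0 -> ra <= t0 + h <= rb \/ sa < t0 + h < sb) ->
  (forall t, ra < t < rb -> LX t + s * LY t + LZ t * GY t ^ 2 <> 0 /\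
                            LX t + (- s) * LY t + LZ t * GY t ^ 2 <> 0) ->
  (forall t, sa < t < sb -> LX t + s * LY t + LZ t * GY t ^ 2 = 0) ->
  (exists a b c, forall t, ra < t < rb -> LX t + s * LY t + LZ t * GY t ^ 2 = a * t^2 + b*t + c) /\
  derivable_pt_lim (fun t => LX t + s * LY t + LZ t * GY t ^ 2) t0 0.
Proof.
  intros HX HY HZ HG HN Hs Hl0 Hgood HA HB Hr1 Hr2 Hr3 Hs1 Hs2 Hs3 Ht0r Ht0s Hm0 Hgeo Hreg Hsing.
  set (phj := fun t => LX t + s * LY t + LZ t * GY t ^ 2).
  set (pho := fun t => LX t + (- s) * LY t + LZ t * GY t ^ 2).
  assert (Ht0AB : A <= t0 <= B) by (destruct Ht0r; lra).
  assert (CX : forall t, A <= t <= B -> LX t = LX t0).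
  { assert (K : forall t, A <= t <= B -> LX t = LX A).
    { apply (KL_all T LX N A B); auto; try lra. intros t Ht HNt. apply (Hgood t ltac:(lra) HNt). }
    intros t Ht. rewrite (K t Ht), (K t0 Ht0AB). auto. }
  assert (CZ : forall t, A <= t <= B -> LZ t = LZ t0).
  { assert (K : forall t, A <= t <= B -> LZ t = LZ A).
    { apply (KL_all T LZ N A B); auto; try lra. intros t Ht HNt. apply (Hgood t ltac:(lra) HNt). }
    intros t Ht. rewrite (K t Ht), (K t0 Ht0AB). auto. }
  set (Lz := LZ t0). set (y0 := GY t0).
  assert (Cj : forall t, 0 <= t <= T -> cw T phj t).
  { intros t Ht. apply lim_phi; apply AC_cw; auto. }
  assert (Co : forall t, 0 <= t <= T -> cw T pho t).
  { intros t Ht. apply lim_phi; apply AC_cw; auto. }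
  assert (CG : cw T GY t0) by (apply AC_cw; auto; lra).
  assert (Hl0p : 0 < lam0).
  { destruct (nonnull T N ra rb HN ltac:(lra) Hr2 ltac:(lra)) as [t [Ht HNt]].
    destruct (Hgood t ltac:(lra) HNt) as (_&_&_&_&_&_&_&E).
    destruct (Hreg t Ht) as [H1 _]. pose proof (Rabs_pos_lt _ H1). pose proof (Rabs_pos (pho t)).
    unfold pho in *. lra. }
  assert (Sgood : forall t, sa < t < sb -> ~ N t -> GY t * Lz = 0).
  { intros t Ht HNt.
    destruct (Hgood t ltac:(lra) HNt) as (D1&D2&D3&D4&U1&U2&M1&M2).
    pose proof (dphi LX LY LZ GY s t _ _ _ _ D1 D3 D2 D4) as D.
    pose proof (loc_zero phj sa sb t Hsing Ht) as D0.
    pose proof (uniqueness_limite _ _ _ _ D D0) as E.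
    assert (E' : s * (uo t * (GY t * LZ t)) = 0) by nra.
    assert (Hpj : phj t = 0) by (apply Hsing; auto). unfold phj in Hpj.
    rewrite Hpj in M1, M2. rewrite Rabs_R0 in M2.
    assert (Huo : uo t <> 0) by (intros Hz; rewrite Hz in M1; lra).
    assert (Hs0 : s <> 0) by (destruct Hs; lra).
    apply Rmult_integral in E'. destruct E' as [E'|E']. lra.
    apply Rmult_integral in E'. destruct E' as [E'|E']. lra.
    unfold Lz. rewrite <- (CZ t) by lra. auto. }
  assert (Hzy : Lz * y0 = 0).
  { destruct (Req_dec y0 0) as [H0|H0]. rewrite H0; ring.
    destruct (Req_dec Lz 0) as [H1|H1]. rewrite H1; ring. exfalso.
    destruct (CG (Rabs y0) (Rabs_pos_lt _ H0)) as [d [Hd Hd']].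
    destruct (near_int sa sb t0 d Hs2 Ht0s Hd) as (p & q & Hpq & Hp & Hq & Hp' & Hq').
    destruct (nonnull T N p q HN ltac:(lra) Hpq ltac:(lra)) as [t [Ht HNt]].
    specialize (Sgood t ltac:(lra) HNt). apply Rmult_integral in Sgood. destruct Sgood as [Hy|]; [|lra].
    specialize (Hd' t). simpl in Hd'. unfold Rdist in Hd'. rewrite Hy in Hd'.
    assert (Rabs (0 - GY t0) < Rabs y0) by (apply Hd'; split; [lra| apply Rabs_def1; lra]).
    rewrite Rminus_0_l, Rabs_Ropp in H. unfold y0 in H. lra. }
  assert (Hp0 : phj t0 = 0).
  { destruct (Req_dec (phj t0) 0) as [H0|H0]; auto. exfalso.
    destruct (Cj t0 ltac:(lra) (Rabs (phj t0)) (Rabs_pos_lt _ H0)) as [d [Hd Hd']].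
    destruct (near_int sa sb t0 d Hs2 Ht0s Hd) as (p & q & Hpq & Hp & Hq & Hp' & Hq').
    specialize (Hd' ((p+q)/2)). simpl in Hd'. unfold Rdist in Hd'.
    replace (phj ((p+q)/2)) with 0 in Hd' by (symmetry; apply Hsing; lra).
    assert (Rabs (0 - phj t0) < Rabs (phj t0)) by (apply Hd'; split; [lra| apply Rabs_def1; lra]).
    rewrite Rminus_0_l, Rabs_Ropp in H. lra. }
  destruct (sign_const T phj ra rb ltac:(lra) Hr2 ltac:(lra) Cj) as [sj [Hsj Hsjp]].
  { intros t Ht. apply (Hreg t Ht). }
  destruct (sign_const T pho ra rb ltac:(lra) Hr2 ltac:(lra) Co) as [so [Hso Hsop]].
  { intros t Ht. apply (Hreg t Ht). }
  assert (Ctl : forall t, ra < t < rb -> ~ N t -> uj t = sj /\ uo t = so).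
  { intros t Ht HNt. destruct (Hgood t ltac:(lra) HNt) as (_&_&_&_&U1&U2&M1&M2).
    eapply ctrl_eq; eauto. }
  set (ka := s * (sj - so)).
  assert (HGY : forall x, ra <= x <= rb -> GY x = y0 + ka * (x - t0)).
  { set (g := fun x => GY x + (- ka) * x + 0 * x ^ 2 + 0).
    assert (K : forall x, ra <= x <= rb -> g x = g ra).
    { apply (KL_all T g N ra rb); auto; try lra.
      - apply AC_quad; auto.
      - intros t Ht HNt. destruct (Hgood t ltac:(lra) HNt) as (_&_&_&D4&_).
        destruct (Ctl t Ht HNt) as [E1 E2].
        eapply dpl_eq. apply dquad. exact D4. rewrite E1, E2. unfold ka. ring. }
    intros x Hx. pose proof (K x Hx). pose proof (K t0 ltac:(destruct Ht0r; lra)).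
    unfold g, y0 in *. lra. }
  set (al := (sj + so) * Lz * (2 * y0 - 2 * ka * t0)).
  set (be := (sj + so) * Lz * ka).
  assert (HLY : forall x, ra <= x <= rb -> LY x + al * x + be * x ^ 2 + 0 = LY t0 + al * t0 + be * t0 ^ 2 + 0).
  { set (g := fun x => LY x + al * x + be * x ^ 2 + 0).
    assert (K : forall x, ra <= x <= rb -> g x = g ra).
    { apply (KL_all T g N ra rb); auto; try lra.
      - apply AC_quad; auto.
      - intros t Ht HNt. destruct (Hgood t ltac:(lra) HNt) as (_&_&D3&_).
        destruct (Ctl t Ht HNt) as [E1 E2].
        eapply dpl_eq. apply dquad. exact D3. rewrite E1, E2, (HGY t) by lra.
        rewrite (CZ t) by lra. unfold al, be, Lz. ring. }
    intros x Hx. pose proof (K x Hx). pose proof (K t0 ltac:(destruct Ht0r; lra)).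
    unfold g in *. lra. }
  set (C := - s * (sj + so) * Lz * ka + Lz * ka ^ 2).
  assert (Hq : forall x, ra <= x <= rb -> phj x = C * (x - t0) ^ 2).
  { intros x Hx. unfold phj.
    assert (Ey : LY x = LY t0 + al * t0 + be * t0 ^ 2 - al * x - be * x ^ 2) by (pose proof (HLY x Hx); lra).
    rewrite Ey, (HGY x Hx), (CX x) by lra. rewrite (CZ x) by lra. fold Lz.
    unfold phj in Hp0. fold Lz y0 in Hp0.
    assert (E : LX t0 + s * (LY t0 + al * t0 + be * t0 ^ 2 - al * x - be * x ^ 2) +
       Lz * (y0 + ka * (x - t0)) ^ 2 - C * (x - t0) ^ 2 =
       (LX t0 + s * LY t0 + Lz * y0 ^ 2) + (2 * ka - 2 * s * (sj + so)) * (x - t0) * (Lz * y0))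
      by (unfold al, be, C; ring).
    rewrite Hp0, Hzy in E. lra. }
  split.
  - exists C, (-2 * C * t0), (C * t0 ^ 2). intros t Ht. fold (phj t). rewrite (Hq t) by lra. ring.
  - fold phj. intros eps He.
    assert (Hd : 0 < Rmin m0 (eps / (Rabs C + 1))).
    { apply Rmin_glb_lt; auto. apply Rdiv_lt_0_compat; auto. pose proof (Rabs_pos C); lra. }
    exists (mkposreal _ Hd). intros h Hh Hlt. simpl in Hlt.
    assert (Hh1 : Rabs h < m0) by (eapply Rlt_le_trans; [apply Hlt|apply Rmin_l]).
    assert (Hh2 : Rabs h < eps / (Rabs C + 1)) by (eapply Rlt_le_trans; [apply Hlt|apply Rmin_r]).
    rewrite Hp0, Rminus_0_r, Rminus_0_r.
    destruct (Hgeo h (conj (Rabs_pos_lt _ Hh) Hh1)) as [Hin|Hin].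
    + rewrite (Hq (t0 + h) Hin). replace ((t0 + h - t0) ^ 2) with (h * h) by ring.
      replace (C * (h * h) / h) with (C * h) by (field; auto).
      rewrite Rabs_mult. pose proof (Rabs_pos C). pose proof (Rabs_pos h).
      assert (Rabs h * (Rabs C + 1) < eps).
      { apply Rmult_lt_compat_r with (r := Rabs C + 1) in Hh2; [|lra].
        unfold Rdiv in Hh2. rewrite Rmult_assoc, Rinv_l, Rmult_1_r in Hh2 by lra. auto. }
      assert (Rabs C * Rabs h <= Rabs h * (Rabs C + 1)) by nra. lra.
    + replace (phj (t0 + h)) with 0 by (symmetry; apply Hsing; auto). unfold Rdiv. rewrite Rmult_0_l, Rabs_R0. auto.
Qed.
Lemma ae3 T (P1 P2 P3 : R -> Prop) : ae_on T P1 -> ae_on T P2 -> ae_on T P3 ->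
  exists N, null_set N /\ forall t, 0 <= t <= T -> ~ N t -> P1 t /\ P2 t /\ P3 t.
Proof.
  intros H1 H2 H3.
  exists (fun t => ((0 <= t <= T /\ ~ P1 t) \/ (0 <= t <= T /\ ~ P2 t)) \/ (0 <= t <= T /\ ~ P3 t)).
  split. apply null_union; [apply null_union|]; auto.
  intros t Ht HN. repeat split; apply NNPP; intros Hn; apply HN; tauto.
Qed.

Lemma dq_unique f x al be ga d : (forall q, f q = al * q + be * q ^ 2 + ga) ->
  derivable_pt_lim f x d -> d = al + 2 * be * x.
Proof.
  intros E H.
  assert (Ef : f = fun q => (fun _ => 0) q + al * q + be * q ^ 2 + ga).
  { apply FunctionalExtensionality.functional_extensionality. intros q. rewrite E. ring. }
  rewrite Ef in H. pose proof (dquad (fun _ => 0) x 0 al be ga (derivable_pt_lim_const 0 x)) as D.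
  pose proof (uniqueness_limite _ _ _ _ H D). lra.
Qed.

Lemma geom t0 e1 e2 ra rb sa sb : 0 < e1 -> 0 < e2 ->
  ((ra = t0 - e1 /\ rb = t0 /\ sa = t0 /\ sb = t0 + e2) \/
   (sa = t0 - e1 /\ sb = t0 /\ ra = t0 /\ rb = t0 + e2)) ->
  t0 - e1 <= ra /\ ra < rb /\ rb <= t0 + e2 /\ t0 - e1 <= sa /\ sa < sb /\ sb <= t0 + e2 /\
  (t0 = ra \/ t0 = rb) /\ (t0 = sa \/ t0 = sb) /\ 0 < Rmin e1 e2 /\
  (forall h, 0 < Rabs h < Rmin e1 e2 -> ra <= t0 + h <= rb \/ sa < t0 + h < sb).
Proof.
  intros H1 H2 Hc.
  assert (0 < Rmin e1 e2) by (apply Rmin_glb_lt; auto).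
  assert (Hh : forall h, 0 < Rabs h < Rmin e1 e2 -> (h < 0 /\ - h < e1) \/ (0 < h /\ h < e2)).
  { intros h [Hh1 Hh2]. pose proof (Rmin_l e1 e2). pose proof (Rmin_r e1 e2).
    destruct (Rle_dec 0 h). rewrite Rabs_pos_eq in * by lra. right; lra.
    rewrite Rabs_left in * by lra. left; lra. }
  destruct Hc as [(->&->&->&->)|(->&->&->&->)]; repeat split; try lra.
  - intros h Hh'. destruct (Hh h Hh'); [left|right]; lra.
  - intros h Hh'. destruct (Hh h Hh'); [right|left]; lra.
Qed.

Theorem mainTheorem13 (T : R) (lam g : R -> pt) (u1 u2 : R -> R)
  (j : nat) (t0 e1 e2 ra rb sa sb : R) :
  extremal_pair T lam g u1 u2 ->
  (j = 1%nat \/ j = 2%nat) ->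
  0 < e1 -> 0 < e2 -> 0 <= t0 - e1 -> t0 + e2 <= T ->
  ((ra = t0 - e1 /\ rb = t0 /\ sa = t0 /\ sb = t0 + e2) \/
   (sa = t0 - e1 /\ sb = t0 /\ ra = t0 /\ rb = t0 + e2)) ->
  regular_arc lam g ra rb ->
  singular_arc j lam g sa sb ->
  (exists a b c : R, forall t, ra < t < rb ->
     phi j lam g t = a * t ^ 2 + b * t + c) /\
  derivable_pt_lim (phi j lam g) t0 0.
Proof.
  intros HE Hj He1 He2 HA HB Hcase Hreg Hsing.
  destruct HE as (Hadm & ACLX & ACLY & ACLZ & Hnz & Hham & [lam0 [Hl0 Hmax]]).
  destruct Hadm as (ACGX & ACGY & ACGZ & _ & _ & Hbnd & _).
  destruct (ae3 _ _ _ _ Hbnd Hham Hmax) as [N [HN Hgood]].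
  destruct (geom t0 e1 e2 ra rb sa sb He1 He2 Hcase) as (G1&G2&G3&G4&G5&G6&G7&G8&G9&G10).
  set (LX := fun t => cx (lam t)). set (LY := fun t => cy (lam t)).
  set (LZ := fun t => cz (lam t)). set (GY := fun t => cy (g t)).
  assert (E1 : forall t, pairing (lam t) (Y1 (g t)) = LX t + 1 * LY t + LZ t * GY t ^ 2).
  { intros t. unfold pairing, Y1, LX, LY, LZ, GY, cx, cy, cz. simpl. ring. }
  assert (E2 : forall t, pairing (lam t) (Y2 (g t)) = LX t + (- 1) * LY t + LZ t * GY t ^ 2).
  { intros t. unfold pairing, Y2, LX, LY, LZ, GY, cx, cy, cz. simpl. ring. }
  assert (F : forall t, 0 <= t <= T -> ~ N t ->
     derivable_pt_lim LX t 0 /\ derivable_pt_lim LZ t 0 /\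
     derivable_pt_lim LY t (-(u1 t + u2 t) * 2 * GY t * LZ t) /\
     derivable_pt_lim GY t (u1 t - u2 t) /\
     Rabs (u1 t) <= 1 /\ Rabs (u2 t) <= 1 /\
     u1 t * (LX t + 1 * LY t + LZ t * GY t ^ 2) + u2 t * (LX t + (- 1) * LY t + LZ t * GY t ^ 2) = lam0 /\
     Rabs (LX t + 1 * LY t + LZ t * GY t ^ 2) + Rabs (LX t + (- 1) * LY t + LZ t * GY t ^ 2) = lam0).
  { intros t Ht HNt. destruct (Hgood t Ht HNt) as [[B1 B2] [H [M1 M2]]].
    rewrite !E1, !E2 in *. cbv zeta in H.
    destruct H as (dpx & dpy & dpz & dlx & dly & dlz & Dpx & Dpy & Dpz & Dlx & Dly & Dlz & DLX & DLY & DLZ & DGX & DGY & DGZ).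
    apply dq_unique with (al := 0) (be := 0) (ga := Ham (lam t) (g t) (u1 t) (u2 t)) in Dpx;
      [|intros q; unfold Ham, pairing, Y1, Y2, cx, cy, cz; simpl; ring].
    apply dq_unique with (al := 0) (be := (u1 t + u2 t) * cz (lam t))
      (ga := (u1 t + u2 t) * cx (lam t) + (u1 t - u2 t) * cy (lam t)) in Dpy;
      [|intros q; unfold Ham, pairing, Y1, Y2, cx, cy, cz; simpl; ring].
    apply dq_unique with (al := 0) (be := 0) (ga := Ham (lam t) (g t) (u1 t) (u2 t)) in Dpz;
      [|intros q; unfold Ham, pairing, Y1, Y2, cx, cy, cz; simpl; ring].
    apply dq_unique with (al := u1 t - u2 t) (be := 0)
      (ga := (u1 t + u2 t) * (cx (lam t) + cz (lam t) * cy (g t) ^ 2)) in Dly;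
      [|intros q; unfold Ham, pairing, Y1, Y2, cx, cy, cz; simpl; ring].
    repeat split; auto.
    - eapply dpl_eq. exact DLX. rewrite Dpx. ring.
    - eapply dpl_eq. exact DLZ. rewrite Dpz. ring.
    - eapply dpl_eq. exact DLY. rewrite Dpy. unfold GY, LZ. ring.
    - eapply dpl_eq. exact DGY. rewrite Dly. ring. }
  assert (Hj' : forall t, phi j lam g t = pairing (lam t) (Yf j (g t))) by reflexivity.
  destruct Hj as [-> | ->].
  - assert (Ephi : phi 1 lam g = fun t => LX t + 1 * LY t + LZ t * GY t ^ 2).
    { apply FunctionalExtensionality.functional_extensionality. intros t. apply E1. }
    rewrite Ephi.
    apply (core T LX LY LZ GY u1 u2 1 lam0 N t0 (t0 - e1) (t0 + e2) ra rb sa sb (Rmin e1 e2));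
      auto; try lra.
    + intros t Ht HNt. destruct (F t Ht HNt) as (D1&D2&D3&D4&U1&U2&M1&M2).
      repeat split; auto. eapply dpl_eq. exact D4. ring.
    + intros t Ht. destruct (Hreg t Ht) as [R1 R2]. rewrite <- E1, <- E2. auto.
    + intros t Ht. rewrite <- E1. apply (Hsing t Ht).
  - assert (Ephi : phi 2 lam g = fun t => LX t + (-1) * LY t + LZ t * GY t ^ 2).
    { apply FunctionalExtensionality.functional_extensionality. intros t. apply E2. }
    rewrite Ephi.
    apply (core T LX LY LZ GY u2 u1 (-1) lam0 N t0 (t0 - e1) (t0 + e2) ra rb sa sb (Rmin e1 e2));
      auto; try lra.
    + intros t Ht HNt. destruct (F t Ht HNt) as (D1&D2&D3&D4&U1&U2&M1&M2).
      replace (- - 1) with 1 by ring.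
      repeat split; auto.
      * eapply dpl_eq. exact D3. ring.
      * eapply dpl_eq. exact D4. ring.
      * rewrite <- M1. ring.
      * rewrite <- M2. ring.
    + intros t Ht. destruct (Hreg t Ht) as [R1 R2]. replace (- -1) with 1 by ring.
      rewrite <- E1, <- E2. auto.
    + intros t Ht. rewrite <- E2. apply (Hsing t Ht).
Qed.
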